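(* Let $S$ be a finite poset whose Hasse graph $\Gamma(S)$ is the path $A_n$. Suppose $S$ contains a subposet $W$ isomorphic to $W^{k,k+1}$ ($k\ge1$) with $s_1^+,s_{k+1}^+\notin S^\times$, or a subposet $W$ isomorphic to $W^{k+1,k}$ with $s_1^-,s_{k+1}^-\notin S^\times$. Then $C(f_S)\ne\varnothing$.
   Context: $f_S(x)=\sum_i x_i^2+\sum_{s_i<s_j}x_ix_j$. $H_n=\{x:\sum x_i=0\}$; $C(f)$ is the set of $h\in H_n\setminus\{0\}$ with either all $\partial f/\partial x_i(h)\le0$ or all $\ge0$. $\Gamma(S)$: vertices $S$, edge between $s,s'$ when one covers the other. $W^{k,k+1}=\{s_1^-,\dots,s_k^-,s_1^+,\dots,s_{k+1}^+\}$ with only strict relations $s_i^-<s_i^+$, $s_i^-<s_{i+1}^+$ ($1\le i\le k$); $W^{k+1,k}=\{s_1^-,\dots,s_{k+1}^-,s_1^+,\dots,s_k^+\}$ with only strict relations $s_i^+>s_i^-$, $s_i^+>s_{i+1}^-$ ($1\le i\le k$). $S^\times$ is the set of junction points of $S$: elements covering at least two elements of $S$ or covered by at least two elements of $S$. *)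

(* Defs.v *)
From HB Require Import structures.
From mathcomp Require Import all_boot all_order all_algebra.
From mathcomp Require Import mpoly.
Set Implicit Arguments. Unset Strict Implicit. Unset Printing Implicit Defensive.
Import Order.LTheory GRing.Theory Num.Theory.

Section PosetDefs.
Context {disp : Order.disp_t} {S : finPOrderType disp}.
Local Open Scope order_scope.

Definition covers (x y : S) : bool :=
  (y < x) && [forall z : S, ~~ ((y < z) && (z < x))].

Definition hasse_edge (x y : S) : bool := covers x y || covers y x.

Definition hasse_is_path : Prop :=
  exists p : 'I_#|S| -> S, bijective p /\
    forall i j : 'I_#|S|,
      hasse_edge (p i) (p j) = ((i.+1 == j :> nat) || (j.+1 == i :> nat)).

Definition junction (x : S) : bool :=
  (1 < #|[set y : S | covers x y]|)%N || (1 < #|[set y : S | covers y x]|)%N.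

(* W^{k,k+1}: elements inl i = s_{i+1}^- (i < k), inr j = s_{j+1}^+ (j < k+1);
   only strict relations s_i^- < s_i^+, s_i^- < s_{i+1}^+. *)
Definition Wkk1_lt (k : nat) (a b : 'I_k + 'I_k.+1) : bool :=
  match a, b with
  | inl i, inr j => (j == i :> nat) || (j == i.+1 :> nat)
  | _, _ => false
  end.

(* W^{k+1,k}: elements inl i = s_{i+1}^- (i < k+1), inr j = s_{j+1}^+ (j < k);
   only strict relations s_j^+ > s_j^-, s_j^+ > s_{j+1}^-. *)
Definition Wk1k_lt (k : nat) (a b : 'I_k.+1 + 'I_k) : bool :=
  match a, b with
  | inl i, inr j => (i == j :> nat) || (i == j.+1 :> nat)
  | _, _ => false
  end.

Definition has_Wkk1 (k : nat) : Prop :=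
  exists phi : 'I_k + 'I_k.+1 -> S,
    injective phi /\
    (forall a b, (phi a < phi b) = Wkk1_lt a b) /\
    ~~ junction (phi (inr ord0)) /\ ~~ junction (phi (inr ord_max)).

Definition has_Wk1k (k : nat) : Prop :=
  exists phi : 'I_k.+1 + 'I_k -> S,
    injective phi /\
    (forall a b, (phi a < phi b) = Wk1k_lt a b) /\
    ~~ junction (phi (inl ord0)) /\ ~~ junction (phi (inl ord_max)).

End PosetDefs.

Section Quadratic.
Context {disp : Order.disp_t} {S : finPOrderType disp} (R : realFieldType).
Local Open Scope ring_scope.

(* label S = {s_1,...,s_n} via enum_val; f_S in variables x_i, i < n *)
Definition fS : {mpoly R[#|S|]} :=
  \sum_(i < #|S|) 'X_i ^+ 2
  + \sum_(i < #|S|) \sum_(j < #|S| | (enum_val i < enum_val j)%O) 'X_i * 'X_j.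

(* C(f) : nonzero h in H_n with all partial derivatives <= 0 or all >= 0 *)
Definition Cset (n : nat) (f : {mpoly R[n]}) : ('I_n -> R) -> Prop :=
  fun h => (exists i, h i != 0) /\ \sum_(i < n) h i = 0 /\
    ((forall i, (mderiv i f).@[h] <= 0) \/ (forall i, 0 <= (mderiv i f).@[h])).

End Quadratic.

(* Main.v *)
Require Import Defs.
From HB Require Import structures.
From mathcomp Require Import all_boot all_order all_algebra.
From mathcomp Require Import mpoly.
From mathcomp Require Import zify ring lra.
Set Implicit Arguments. Unset Strict Implicit. Unset Printing Implicit Defensive.
Import Order.LTheory GRing.Theory Num.Theory.

Module DPart.
Local Open Scope ring_scope.
Lemma sumI (R : realFieldType) m v (f : nat -> R) :
  \sum_(t < m) (t == v :> nat)%:R * f t = if (v < m)%N then f v else 0.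
Proof.
case: (ltnP v m) => h.
  rewrite (bigD1 (Ordinal h)) //= eqxx mul1r big1 ?addr0 // => t.
  by rewrite -val_eqE /= => /negbTE ->; rewrite mul0r.
rewrite big1 // => t _.
have -> : (t == v :> nat) = false by move: (ltn_ord t) h; lia.
by rewrite mul0r.
Qed.

Section W.
Variables (R : realFieldType) (K : nat).
Definition w (t : nat) : R := (-1) ^+ t * ((0 < t)%N%:R + (t < K)%N%:R).

Lemma w_sum : \sum_(t < K.+1) w t = 0.
Proof.
rewrite /w (eq_bigr (fun t : 'I_K.+1 => (-1) ^+ t * (0 < t)%N%:R + (-1) ^+ t * (t < K)%N%:R)); last by move=> t _; rewrite mulrDr.
rewrite big_split /= big_ord_recl big_ord_recr /= ltnn !mulr0 add0r addr0 -big_split /=.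
by rewrite big1 // => t _; rewrite /bump /= add1n ltn_ord exprS mulr1 mulN1r mulr1 addNr.
Qed.

Lemma wval t : (t <= K)%N -> ~~ odd K -> w t = if odd t then -2 else (0 < t)%N%:R + (t < K)%N%:R.
Proof.
move=> tK eK; rewrite /w -signr_odd; case: ifP => ot; last by rewrite expr0 mul1r.
rewrite expr1 mulN1r; have -> : (0 < t)%N by case: t ot {tK}.
have -> : (t < K)%N by rewrite ltn_neqAle tK andbT; apply/negP => /eqP e; rewrite -e ot in eK.
by [].
Qed.

Lemma w_le2 t : (t <= K)%N -> ~~ odd K -> w t <= 2.
Proof.
move=> tK eK; rewrite wval //; case: ifP => _; first lra.
by case: (0 < t)%N; case: (t < K)%N; rewrite /= ?add0r ?addr0; lra.
Qed.

Lemma w_pair a : (a < K)%N -> ~~ odd K -> w a + w a.+1 <= 0.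
Proof.
move=> aK eK; have h1 := w_le2 (ltnW aK) eK; have h2 := w_le2 aK eK.
case oa: (odd a).
  rewrite (wval (ltnW aK)) // oa; lra.
rewrite [w a.+1]wval //= oa /=; lra.
Qed.

Lemma w_trip u : (u <= K)%N -> ~~ odd K ->
  2 * w u + (0 < u)%N%:R * w u.-1 + (u < K)%N%:R * w u.+1 <= 0.
Proof.
move=> uK eK; case ou: (odd u).
  have u0 : (0 < u)%N by case: u ou {uK}.
  have uK' : (u < K)%N by rewrite ltn_neqAle uK andbT; apply/negP => /eqP e; rewrite -e ou in eK.
  rewrite u0 uK' (wval uK eK) ou.
  have := w_le2 uK' eK; have := w_le2 (ltnW (leq_ltn_trans (leq_pred u) uK')) eK.
  rewrite !mul1r; lra.
rewrite (wval uK eK) ou.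
case: (posnP u) => [u0|u0] /=.
  subst u; rewrite mul0r addr0 /=.
  case: (ltnP 0 K) => h /=.
    rewrite mul1r (wval h eK) /=; lra.
  rewrite mul0r; lra.
have ho : odd u.-1 by move: ou u0; clear; case: u => [|u] //=; case: (odd u).
rewrite (wval (leq_trans (leq_pred u) uK) eK) ho mul1r.
case: (ltnP u K) => h /=.
  rewrite mul1r (wval h eK) /= ou /=; lra.
rewrite mul0r; lra.
Qed.
End W.

Definition cst (d : nat -> bool) i j : bool :=
  all (fun s => d s == d (minn i j)) (iota (minn i j) (maxn i j - minn i j)).

Lemma cstP d i j : reflect (forall s, (minn i j <= s < maxn i j)%N -> d s = d (minn i j)) (cst d i j).
Proof.
apply: (iffP allP) => H s.
  move=> hs; apply/eqP; apply: H; rewrite mem_iota; lia.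
rewrite mem_iota => hs; apply/eqP; apply: H; lia.
Qed.

Lemma cstC d i j : cst d i j = cst d j i.
Proof. by rewrite /cst minnC maxnC. Qed.

Lemma cst_sub d i j i' j' : (minn i j <= minn i' j')%N -> (maxn i' j' <= maxn i j)%N ->
  cst d i j -> cst d i' j'.
Proof.
move=> h1 h2 /cstP H; apply/cstP => s hs.
rewrite H; last lia. rewrite H //; lia.
Qed.

Lemma sumIS (R : realFieldType) m u (f : nat -> R) :
  \sum_(t < m) (t.+1 == u :> nat)%:R * f t = if (0 < u)%N && (u.-1 < m)%N then f u.-1 else 0.
Proof.
case: u => [|u] /=.
  by rewrite big1 // => t _; rewrite mul0r.
by rewrite (eq_bigr (fun t : 'I_m => (t == u :> nat)%:R * f t)) ?sumI // => t _; rewrite eqSS.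
Qed.

Section Core.
Local Close Scope ring_scope.
Variables (R : realFieldType) (n K : nat) (d : nat -> bool) (c : nat -> nat).
Hypotheses (K0 : (0 < K)%N) (eK : ~~ odd K) (c01 : (c 0 < c 1)%N)
  (cn : forall t, (t <= K)%N -> (c t < n)%N)
  (seg : forall t, (t < K)%N -> cst d (c t) (c t.+1))
  (nseg : forall t, (t.+2 <= K)%N -> ~~ cst d (c t) (c t.+2))
  (e0 : (0 < c 0)%N -> d (c 0).-1 = d (c 0))
  (e1 : ((c K).+1 < n)%N -> d (c K).-1 = d (c K)).

Lemma inc t : (t < K)%N -> (c t < c t.+1)%N.
Proof.
elim: t => [|t IH] h; first exact: c01.
have ab := IH (ltnW h).
have ns := nseg h.
have s2 := seg h.
case: (ltnP (c t.+1) (c t.+2)) => // eb; exfalso; move/negP: ns; apply.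
case: (ltnP (c t.+2) (c t)) => h3.
  apply: cst_sub s2; lia.
apply: cst_sub (seg (ltnW h)); lia.
Qed.

Lemma incm t u : (t < u)%N -> (u <= K)%N -> (c t < c u)%N.
Proof.
elim: u => // u IH tu uK.
case: (ltngtP t u) => h; [|lia|].
  exact: ltn_trans (IH h (ltnW uK)) (inc uK).
by rewrite h; apply: inc.
Qed.

Lemma c_eq t u : (t <= K)%N -> (u <= K)%N -> (c t == c u) = (t == u).
Proof.
move=> tK uK; case: (ltngtP t u) => h.
- by have := incm h uK; lia.
- by have := incm h tK; lia.
- by rewrite h !eqxx.
Qed.

Lemma segd t s : (t < K)%N -> (c t <= s < c t.+1)%N -> d s = d (c t).
Proof.
move=> tK hs; have := inc tK => lt.
move/cstP: (seg tK) => H; rewrite H; last lia.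
by have -> : minn (c t) (c t.+1) = c t by lia.
Qed.

Lemma alt t : (t.+1 < K)%N -> d (c t.+1) != d (c t).
Proof.
move=> h; apply/negP => /eqP e; move/negP: (nseg h); apply; apply/cstP => s hs.
have l1 := inc (ltnW h); have l2 := inc h.
have -> : minn (c t) (c t.+2) = c t by lia.
case: (ltnP s (c t.+1)) => h2.
  apply: segd; [lia|lia].
rewrite -e; apply: segd => //; lia.
Qed.

Lemma ncst_span i j t : (t.+2 <= K)%N -> (minn i j <= c t)%N -> (c t.+2 <= maxn i j)%N ->
  cst d i j = false.
Proof.
move=> h1 h2 h3; apply/negP => H; move/negP: (nseg h1); apply.
have := inc (ltnW h1); have := inc h1 => l1 l2.
apply: cst_sub H; lia.
Qed.

Definition F s : R := (\sum_(t < K.+1) ((s == c t)%:R + (cst d s (c t))%:R) * w R K t)%R.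

Lemma ncst_turn i j v : (0 < v)%N -> (v < K)%N -> (minn i j < c v)%N -> (c v < maxn i j)%N ->
  cst d i j = false.
Proof.
move=> v0 vK h1 h2; apply/negP => /cstP H.
have l : (c v.-1 < c v)%N by apply: incm; lia.
have ev : v.-1.+1 = v by lia.
have a := alt (ltac:(lia) : (v.-1.+1 < K)%N); rewrite ev in a.
have e2 : d ((c v).-1) = d (c v.-1).
  apply: segd; [lia|]; rewrite ev; lia.
move/negP: a; apply; apply/eqP.
rewrite -e2 (H (c v)) ?(H (c v).-1) //; lia.
Qed.

Lemma cst_refl i : cst d i i.
Proof. apply/cstP => s; lia. Qed.

Lemma c_mono t u : (t <= u)%N -> (u <= K)%N -> (c t <= c u)%N.
Proof. rewrite leq_eqVlt => /orP[/eqP ->//|h] uK; exact: ltnW (incm h uK). Qed.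


Lemma F_two s a (b : bool) : (a < K)%N ->
  (forall t, (t <= K)%N -> (s == c t) = false /\ cst d s (c t) = b && ((t == a) || (t == a.+1))) ->
  (F s = b%:R * (w R K a + w R K a.+1))%R.
Proof.
move=> aK H; rewrite /F.
rewrite (eq_bigr (fun t : 'I_K.+1 => ((t == a :> nat)%:R * (b%:R * w R K t) + (t == a.+1 :> nat)%:R * (b%:R * w R K t))%R)); last first.
  move=> t _; have [h1 h2] := H t (ltn_ord t); rewrite h1 h2 add0r.
  case: (t == a :> nat) / eqP; case: (t == a.+1 :> nat) / eqP => /= q1 q2; try lia;
  case: b {H h2} => /=; ring.
rewrite big_split /= (sumI _ _ (fun t => (b%:R * w R K t)%R)) (sumI _ _ (fun t => (b%:R * w R K t)%R)).
rewrite ltnS (ltnW aK) ltnS aK; ring.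
Qed.

Lemma F_one u : (u <= K)%N ->
  (forall t, (t <= K)%N -> cst d (c u) (c t) = [|| t == u, t.+1 == u | t == u.+1]) ->
  (F (c u) = 2 * w R K u + (0 < u)%N%:R * w R K u.-1 + (u < K)%N%:R * w R K u.+1)%R.
Proof.
move=> uK H; rewrite /F.
rewrite (eq_bigr (fun t : 'I_K.+1 => ((t == u :> nat)%:R * (2 * w R K t) + (t.+1 == u :> nat)%:R * w R K t + (t == u.+1 :> nat)%:R * w R K t)%R)); last first.
  move=> t _; have tK : (t <= K)%N := ltn_ord t; rewrite H // c_eq // eq_sym.
  case: (t == u :> nat) / eqP; case: (t.+1 == u :> nat) / eqP; case: (t == u.+1 :> nat) / eqP => /= q1 q2 q3; try lia; ring.
rewrite !big_split /= (sumI _ _ (fun t => (2 * w R K t)%R)) sumI sumIS ltnS uK.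
case: (posnP u) => [->|u0] /=; rewrite ?mul0r ?mul1r ?addr0.
  by rewrite ltnS K0 mul1r.
rewrite (_ : (u.-1 < K.+1)%N = true); last lia.
by rewrite ltnS; case: (ltnP u K) => h /=; rewrite ?mul1r ?mul0r ?addr0.
Qed.

Lemma locate s : (c 0 <= s)%N -> (s <= c K)%N ->
  (exists2 u, (u <= K)%N & s = c u) \/ (exists2 u, (u < K)%N & (c u < s < c u.+1)%N).
Proof.
move=> h0 hK.
suff: forall m, (m <= K)%N -> (s <= c m)%N ->
  (exists2 u, (u <= K)%N & s = c u) \/ (exists2 u, (u < K)%N & (c u < s < c u.+1)%N).
  by move=> H; apply: (H K).
elim=> [|m IH] mK hm.
  by left; exists 0 => //; apply/eqP; rewrite eqn_leq h0 hm.
case: (leqP s (c m)) => h; first exact: IH (ltnW mK) h.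
case: (ltngtP s (c m.+1)) => h2; [|lia|].
  by right; exists m => //; rewrite h h2.
by left; exists m.+1.
Qed.

Lemma F_le0 s : (s < n)%N -> (F s <= 0)%R.
Proof.
move=> sn.
have K2 : (2 <= K)%N by move: K0 eK; case: K => [|[|]].
have cm := c_mono; have ci := incm.
case: (ltnP s (c 0)) => hs0.
  rewrite (@F_two s 0 (cst d s (c 0))) //.
    have := @w_pair R K 0 K0 eK; case: (cst d s (c 0)) => /= h; lra.
  move=> t tK; split.
    have := cm 0 t (leq0n _) tK; move=> h; apply/negbTE/eqP; lia.
  case: t tK => [|[|t]] tK /=.
  - by rewrite andbT.
  - rewrite andbT; apply/idP/idP => H.
      apply: cst_sub H; have := ci 0 1 (ltac:(lia)) (ltac:(lia)); lia.
    apply/cstP => x hx.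
    have ex : minn s (c 1) = s by have := ci 0 1 (ltac:(lia)) (ltac:(lia)); lia.
    have ex0 : minn s (c 0) = s by lia.
    move/cstP: H; rewrite ex ex0 => H.
    case: (ltnP x (c 0)) => hx0.
      by apply: H; lia.
    rewrite (@segd 0 x) //; last by lia.
    rewrite -e0; last lia.
    by apply: H; lia.
  - rewrite andbF; apply: (@ncst_turn _ _ 1) => //.
      by have := ci 0 1 (ltac:(lia)) (ltac:(lia)); lia.
    by have := ci 1 t.+2 (ltac:(lia)) tK; lia.
case: (ltnP (c K) s) => hsK.
  have e : K.-1.+1 = K by lia.
  rewrite (@F_two s K.-1 (cst d s (c K))); last first.
    move=> t tK; split.
      by have := cm t K tK (leqnn _); move=> h; apply/negbTE/eqP; lia.
    case: (ltngtP t K.-1) => h.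
    - have tK2 : (t == K) = false by apply/negbTE/eqP; lia.
      rewrite /= e tK2 andbF; apply: (@ncst_turn _ _ K.-1) => //; try lia.
        by have := ci t K.-1 h (ltac:(lia)); lia.
      by have := ci K.-1 K (ltac:(lia)) (leqnn _); lia.
    - have -> : t = K by lia.
      by rewrite e eqxx andbT.
    - subst t; rewrite /= andbT.
      have l1 : (c K.-1 < c K)%N by apply: ci; lia.
      apply/idP/idP => H.
        by apply: cst_sub H; lia.
      apply/cstP => x hx.
      have ex : minn s (c K.-1) = c K.-1 by lia.
      have ex0 : minn s (c K) = c K by lia.
      move/cstP: H; rewrite ex ex0 => H.
      case: (ltnP x (c K)) => hx0.
        by apply: (@segd K.-1 x); rewrite ?e; lia.
      rewrite H; last lia.
      rewrite -e1; last lia.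
      by apply: (@segd K.-1); rewrite ?e; lia.
    lia.
  rewrite e; have := @w_pair R K K.-1 (ltac:(lia) : (K.-1 < K)%N) eK; rewrite e.
  by case: (cst d s (c K)) => /= h; lra.
case: (locate hs0 hsK) => [[u uK ->]|[u uK /andP[l1 l2]]].
  rewrite F_one //; first exact: w_trip.
  move=> t tK.
  case: (ltngtP t u) => h /=.
  - case: (eqVneq t.+1 u) => [e|ne].
      by subst u; rewrite /= cstC seg //; lia.
    have q : (t == u.+1) = false by apply/negbTE/eqP; lia.
    rewrite q /=.
    apply: (@ncst_turn _ _ t.+1); try lia.
      by have := ci t t.+1 (ltac:(lia)) (ltac:(lia)); lia.
    by have := ci t.+1 u (ltac:(lia)) uK; lia.
  - case: (eqVneq t u.+1) => [e|ne].
      by subst t; rewrite orbT seg //; lia.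
    have q : (t.+1 == u) = false by apply/negbTE/eqP; lia.
    rewrite q /=.
    apply: (@ncst_turn _ _ u.+1); try lia.
      by have := ci u u.+1 (ltac:(lia)) (ltac:(lia)); lia.
    by have := ci u.+1 t (ltac:(lia)) tK; lia.
  - by subst t; rewrite cst_refl.
have l3 : (c u < c u.+1)%N by apply: inc.
rewrite (@F_two s u true) //; first by rewrite mul1r; exact: w_pair.
move=> t tK; split.
  apply/negbTE/eqP => e; case: (leqP t u) => h.
    by have := cm t u h (ltnW uK); lia.
  by have := cm u.+1 t h tK; lia.
rewrite /=.
case: (ltngtP t u) => h /=.
- have q : (t == u.+1) = false by apply/negbTE/eqP; lia.
  rewrite q.
  apply: (@ncst_turn _ _ u); try lia.
  by have := ci t u h (ltnW uK); lia.
- case: (eqVneq t u.+1) => [e|ne].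
    subst t; apply: cst_sub (seg uK); lia.
  apply: (@ncst_turn _ _ u.+1); try lia.
  by have := ci u.+1 t (ltac:(lia)) tK; lia.
- subst t; apply: cst_sub (seg uK); lia.
Qed.

End Core.
End DPart.
Import DPart.

Module CPart.
Section Path.
Context {disp : Order.disp_t} {S : finPOrderType disp}.
Local Open Scope order_scope.
Variables (p : 'I_#|S| -> S) (g : S -> 'I_#|S|) (pK : cancel p g) (gK : cancel g p).
Hypothesis Hedge : forall i j : 'I_#|S|,
      hasse_edge (p i) (p j) = ((i.+1 == j :> nat) || (j.+1 == i :> nat)).
Variable x0 : 'I_#|S|.

Definition P (s : nat) := p (insubd x0 s).
Definition pos (y : S) : nat := val (g y).
Definition d s := P s < P s.+1.

Lemma pos_lt y : (pos y < #|S|)%N.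
Proof. exact: ltn_ord. Qed.

Lemma Ppos y : P (pos y) = y.
Proof. by rewrite /P /pos valKd gK. Qed.

Lemma posP s : (s < #|S|)%N -> pos (P s) = s.
Proof. by move=> hs; rewrite /P /pos pK val_insubd hs. Qed.

Lemma P_inj s t : (s < #|S|)%N -> (t < #|S|)%N -> P s = P t -> s = t.
Proof. by move=> hs ht e; rewrite -(posP hs) -(posP ht) e. Qed.

Lemma hedge_pos x y : hasse_edge x y = ((pos x).+1 == pos y) || ((pos y).+1 == pos x).
Proof. by rewrite -Hedge !gK. Qed.

Lemma covers_lt (x y : S) : covers x y -> y < x.
Proof. by case/andP. Qed.

Lemma step s : (s.+1 < #|S|)%N -> ~~ d s -> P s.+1 < P s.
Proof.
move=> hs nd.
have : hasse_edge (P s) (P s.+1) by rewrite hedge_pos !posP ?eqxx //; lia.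
by case/orP => /covers_lt // h; rewrite /d h in nd.
Qed.

Definition upI i j := forall s, (i <= s < j)%N -> d s.
Definition downI i j := forall s, (i <= s < j)%N -> ~~ d s.
Definition mono i j := ((i < j)%N /\ upI i j) \/ ((j < i)%N /\ downI j i).

Lemma mono_trans i k j : mono i k -> mono k j -> mono i j.
Proof.
rewrite /mono /upI /downI.
case=> [[ik u1]|[ki d1]] [[kj u2]|[jk d2]].
- left; split; first lia. move=> s hs; case: (ltnP s k) => h; [apply: u1|apply: u2]; lia.
- have h1 := u1 k.-1; have h2 := d2 k.-1.
  case: (ltnP i j) => ij.
    by exfalso; move: (h1 ltac:(lia)) (h2 ltac:(lia)) => ->.
  by exfalso; move: (h1 ltac:(lia)) (h2 ltac:(lia)) => ->.
- by exfalso; move: (d1 k ltac:(lia)) (u2 k ltac:(lia)) => /negP.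
- right; split; first lia. move=> s hs; case: (ltnP s k) => h; [apply: d2|apply: d1]; lia.
Qed.

Lemma cov_mono (x y : S) : covers y x -> mono (pos x) (pos y).
Proof.
move=> cov; have xy := covers_lt cov.
have : hasse_edge y x by rewrite /hasse_edge cov.
rewrite hedge_pos => /orP[] /eqP e.
  right; split; first lia.
  move=> s hs; have -> : s = pos y by lia.
  by rewrite /d e !Ppos; apply/negP => yx; move: (lt_trans xy yx); rewrite ltxx.
left; split; first lia.
move=> s hs; have -> : s = pos x by lia.
by rewrite /d e !Ppos.
Qed.

Lemma ncov_mid (x y : S) : ~~ covers y x -> x < y -> exists z, (x < z) && (z < y).
Proof.
move=> nc xy; move: nc; rewrite /covers xy /= => /forallPn [z].
by rewrite negbK => h; exists z.
Qed.

Lemma lt_mono_aux N : forall x y : S, (#|[set z | ((x < z) && (z < y))%O]| <= N)%N ->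
  x < y -> mono (pos x) (pos y).
Proof.
elim: N => [|N IH] x y hN xy; have [cov|ncov] := boolP (covers y x).
- exact: cov_mono.
- case: (ncov_mid ncov xy) => z hz.
  have : (0 < #|[set z | ((x < z) && (z < y))%O]|)%N by apply/card_gt0P; exists z; rewrite inE.
  lia.
- exact: cov_mono.
- case: (ncov_mid ncov xy) => z /andP[xz zy].
  have c1 : (#|[set w | ((x < w) && (w < z))%O]| <= N)%N.
    have: [set w | ((x < w) && (w < z))%O] \proper [set w | ((x < w) && (w < y))%O].
      apply/properP; split.
        apply/subsetP => w; rewrite !inE => /andP[-> wz] /=; exact: lt_trans wz zy.
      by exists z; rewrite !inE ?xz ?zy ?ltxx /= ?andbF.
    move/proper_card; lia.
  have c2 : (#|[set w | ((z < w) && (w < y))%O]| <= N)%N.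
    have: [set w | ((z < w) && (w < y))%O] \proper [set w | ((x < w) && (w < y))%O].
      apply/properP; split.
        apply/subsetP => w; rewrite !inE => /andP[zw ->]; rewrite andbT; exact: lt_trans xz zw.
      by exists z; rewrite !inE ?xz ?zy ?ltxx.
    move/proper_card; lia.
  exact: (mono_trans (IH x z c1 xz) (IH z y c2 zy)).
Qed.

Lemma lt_mono (x y : S) : x < y -> mono (pos x) (pos y).
Proof. exact: (@lt_mono_aux _ x y (leqnn _)). Qed.

Lemma up_lt i j : (i < j)%N -> (j < #|S|)%N -> upI i j -> P i < P j.
Proof.
elim: j => // j IH ij jn u.
have dj : d j by apply: u; lia.
case: (ltngtP i j) => h; [|lia|].
  apply: lt_trans (IH h ltac:(lia) ltac:(move=> s hs; apply: u; lia)) dj.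
by rewrite h.
Qed.

Lemma down_gt i j : (i < j)%N -> (j < #|S|)%N -> downI i j -> P j < P i.
Proof.
elim: j => // j IH ij jn u.
have dj : P j.+1 < P j by apply: step => //; apply: u; lia.
case: (ltngtP i j) => h; [|lia|].
  apply: lt_trans dj (IH h ltac:(lia) ltac:(move=> s hs; apply: u; lia)).
by rewrite h.
Qed.

Lemma cl_cst i j : (i < #|S|)%N -> (j < #|S|)%N ->
  ((P i == P j) || (P i < P j) || (P j < P i)) = cst d i j.
Proof.
wlog ij : i j / (i <= j)%N.
  move=> H hi hj; case: (leqP i j) => h; first exact: H.
  rewrite cstC -H //; last exact: ltnW.
  by rewrite eq_sym; case: (P j == P i); case: (P i < P j); case: (P j < P i).
move=> hi hj; case: (ltngtP i j) => h; [|lia|].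
- apply/idP/cstP.
  + case/orP => [/orP[/eqP e|lt]|gt].
    * by move: (P_inj hi hj e); lia.
    * move: (lt_mono lt); rewrite !posP // /mono /upI /downI.
      case=> [[_ u]|]; last lia.
      have mi : minn i j = i by lia.
      move=> s hs; rewrite mi !u //; lia.
    * move: (lt_mono gt); rewrite !posP // /mono /upI /downI.
      case=> [|[_ u]]; first lia.
      have mi : minn i j = i by lia.
      move=> s hs; rewrite mi.
      have h1 := u s ltac:(lia); have h2 := u i ltac:(lia).
      by rewrite (negbTE h1) (negbTE h2).
  + move=> H; have mi : minn i j = i by lia.
    case hd: (d i).
    * apply/orP; left; apply/orP; right; apply: up_lt => // s hs.
      have := H s ltac:(lia); rewrite mi hd => ->; done.
    * apply/orP; right; apply: down_gt => // s hs.
      have := H s ltac:(lia); rewrite mi hd => ->; done.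
- subst j; rewrite eqxx /=; apply/esym/cstP => s; lia.
Qed.

Lemma edge_cov (x y : S) : hasse_edge x y -> y < x -> covers x y.
Proof.
case/orP => // /covers_lt xy yx; move: (lt_trans xy yx); by rewrite ltxx.
Qed.

Lemma junc s : (0 < s)%N -> (s.+1 < #|S|)%N -> d s.-1 != d s -> junction (P s).
Proof.
move=> s0 sn nd.
have e1 : hasse_edge (P s.-1) (P s) by rewrite hedge_pos !posP ?eqxx //; lia.
have e2 : hasse_edge (P s) (P s.+1) by rewrite hedge_pos !posP ?eqxx //; lia.
have ne : P s.-1 != P s.+1 by apply/negP => /eqP /P_inj; lia.
have ss : s.-1.+1 = s by lia.
rewrite /junction.
case hd: (d s.-1) nd => /= nd.
- have a1 : P s.-1 < P s by move: hd; rewrite /d ss.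
  have a2 : P s.+1 < P s by apply: step => //; rewrite nd.
  apply/orP; left.
  have sub : [set P s.-1; P s.+1] \subset [set y | covers (P s) y].
    apply/subsetP => y; rewrite !inE => /orP[]/eqP ->.
      by apply: edge_cov => //; rewrite /hasse_edge orbC.
    exact: edge_cov.
  by move: (subset_leq_card sub); rewrite cards2 ne.
- have a1 : P s < P s.-1 by move: (step (ltac:(lia) : (s.-1.+1 < #|S|)%N) (negbT hd)); rewrite ss.
  have a2 : P s < P s.+1 by move: nd; rewrite negbK.
  apply/orP; right.
  have sub : [set P s.-1; P s.+1] \subset [set y | covers y (P s)].
    apply/subsetP => y; rewrite !inE => /orP[]/eqP ->.
      exact: edge_cov.
    by apply: edge_cov => //; rewrite /hasse_edge orbC.
  by move: (subset_leq_card sub); rewrite cards2 ne.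
Qed.

End Path.
End CPart.
Import CPart.

Module APart.
Local Open Scope ring_scope.
Lemma dX (R : realFieldType) n (i m : 'I_n) (h : 'I_n -> R) :
  (mderiv m ('X_i : {mpoly R[n]})).@[h] = (i == m)%:R.
Proof.
rewrite mderivX mnm1E mevalZ.
case: eqP => [->|_]; last by rewrite mul0r.
by rewrite mevalX big1 ?mulr1 // => j _; rewrite mnmBE !mnm1E subnn expr0.
Qed.

Lemma dXX (R : realFieldType) n (i j m : 'I_n) (h : 'I_n -> R) :
  (mderiv m ('X_i * 'X_j : {mpoly R[n]})).@[h] = (i == m)%:R * h j + h i * (j == m)%:R.
Proof. by rewrite mderivM mevalD !mevalM !dX !mevalXU. Qed.

Lemma dfS (R : realFieldType) disp (S : finPOrderType disp) (m : 'I_#|S|) (h : 'I_#|S| -> R) :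
  (mderiv m (@fS disp S R)).@[h] = 2 * h m
    + \sum_(j | (enum_val m < enum_val j)%O) h j
    + \sum_(i | (enum_val i < enum_val m)%O) h i.
Proof.
rewrite /fS mderivD mevalD !(raddf_sum (mderiv m)) !(raddf_sum (meval h)) /=.
rewrite -addrA; congr (_ + _).
  rewrite (bigD1 m) //= big1 ?addr0.
    by rewrite expr2 dXX eqxx mul1r mulr1 mulr2n mulrDl mul1r.
  by move=> i /negbTE ne; rewrite expr2 dXX ne mul0r mulr0 addr0.
rewrite (eq_bigr (fun i => \sum_(j | (enum_val i < enum_val j)%O)
   ((i == m)%:R * h j + h i * (j == m)%:R))); last first.
  move=> i _; rewrite (raddf_sum (mderiv m)) (raddf_sum (meval h)); apply: eq_bigr => j _; exact: dXX.
rewrite (eq_bigr (fun i => \sum_(j | (enum_val i < enum_val j)%O) (i == m)%:R * h j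
   + \sum_(j | (enum_val i < enum_val j)%O) h i * (j == m)%:R)); last by move=> i _; rewrite big_split.
rewrite big_split /=; congr (_ + _).
  rewrite (bigD1 m) //= [X in _ + X]big1 ?addr0.
    by apply: eq_bigr => j _; rewrite eqxx mul1r.
  by move=> i /negbTE ne; rewrite big1 // => j _; rewrite ne mul0r.
rewrite (exchange_big_dep xpredT) //= (bigD1 m) //= [X in _ + X]big1 ?addr0.
  by rewrite big_mkcond [RHS]big_mkcond /=; apply: eq_bigr => i _; rewrite eqxx mulr1.
by move=> j /negbTE ne; rewrite big1 // => i _; rewrite ne mulr0.
Qed.
End APart.
Import APart.

Module EPart.
Section Main.
Context (R : realFieldType) {disp : Order.disp_t} {S : finPOrderType disp}.

Definition Zig K (z : nat -> S) : Prop :=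
 [/\ (forall t u, (t <= K)%N -> (u <= K)%N -> z t = z u -> t = u),
     (forall t, (t < K)%N -> (z t < z t.+1)%O || (z t.+1 < z t)%O),
     (forall t, (t.+2 <= K)%N -> ~~ (z t < z t.+2)%O && ~~ (z t.+2 < z t)%O),
     ~~ junction (z 0%N) & ~~ junction (z K)].

Lemma sum_S_ind (Q : pred S) (z : nat -> S) K (f : nat -> R) :
  (\sum_(y | Q y) \sum_(t < K.+1) (y == z t)%:R * f t = \sum_(t < K.+1) (Q (z t))%:R * f t)%R.
Proof.
rewrite exchange_big /=; apply: eq_bigr => t _.
rewrite big_mkcond /= (bigD1 (z t)) //= eqxx mul1r big1 ?addr0.
  by case: (Q (z t)); rewrite ?mul1r ?mul0r.
by move=> y /negbTE ->; rewrite mul0r if_same.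
Qed.

Lemma from_path K (z : nat -> S) (p : 'I_#|S| -> S) (g : S -> 'I_#|S|)
  (pK : cancel p g) (gK : cancel g p)
  (Hedge : forall i j : 'I_#|S|,
      hasse_edge (p i) (p j) = ((i.+1 == j :> nat) || (j.+1 == i :> nat))) :
  (0 < K)%N -> ~~ odd K -> Zig K z -> (pos g (z 0%N) < pos g (z 1%N))%N ->
  exists h : 'I_#|S| -> R, Cset (@fS disp S R) h.
Proof.
move=> K0 eK [zi z2 z3 j0 jK] c01.
set x0 := g (z 0%N).
set c := fun t => pos g (z t).
set dd := d p x0.
have Hcl : forall t u, cst dd (c t) (c u) = (z t == z u) || (z t < z u)%O || (z u < z t)%O.
  by move=> t u; rewrite -(cl_cst pK gK Hedge x0) ?pos_lt // /c !(Ppos gK).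
have seg : forall t, (t < K)%N -> cst dd (c t) (c t.+1).
  by move=> t tK; rewrite Hcl -orbA z2 // orbT.
have nseg : forall t, (t.+2 <= K)%N -> ~~ cst dd (c t) (c t.+2).
  move=> t tK; rewrite Hcl; case/andP: (z3 t tK) => /negbTE -> /negbTE ->.
  by rewrite !orbF; apply/eqP => /zi; lia.
have e0 : (0 < c 0%N)%N -> dd (c 0%N).-1 = dd (c 0%N).
  move=> h; apply/eqP; apply/negPn/negP => ne; move/negP: j0; apply.
  have := junc pK gK Hedge h _ ne; rewrite /c (Ppos gK); apply.
  by have := pos_lt g (z 1%N); rewrite /c; lia.
have e1 : ((c K).+1 < #|S|)%N -> dd (c K).-1 = dd (c K).
  move=> h; case: (posnP (c K)) => [->//|h0].
  apply/eqP; apply/negPn/negP => ne; move/negP: jK; apply.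
  by have := junc pK gK Hedge h0 h ne; rewrite /c (Ppos gK).
have Fle := F_le0 R K0 eK c01 seg nseg e0 e1.
pose H y := (\sum_(t < K.+1) (y == z t)%:R * w R K t)%R.
have zinj : forall t, (t <= K)%N -> forall u, (u <= K)%N -> (z t == z u) = (t == u).
  by move=> t tK u uK; apply/eqP/eqP => [/zi|->]; [apply|].
exists (fun i => H (enum_val i)); split; [|split].
- exists (enum_rank (z 0%N)); rewrite enum_rankK /H.
  rewrite (eq_bigr (fun t : 'I_K.+1 => (t == 0%N :> nat)%:R * w R K t)%R); last first.
    move=> t _; rewrite zinj //; [by rewrite (eq_sym 0%N) | by rewrite -ltnS].
  rewrite sumI /= /w expr0 mul1r K0 add0r; apply: oner_neq0.
- rewrite -(big_enum_val H) /H (sum_S_ind (fun y => y \in S)). rewrite -[RHS](w_sum R K). apply: eq_bigr => t _; by rewrite inE mul1r.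

- left => m.
  have Hcl2 : forall x y, cst dd (pos g x) (pos g y) = (x == y) || (x < y)%O || (y < x)%O.
    by move=> x y; rewrite -(cl_cst pK gK Hedge x0) ?pos_lt // !(Ppos gK).
  have Hpos : forall x y, (pos g x == pos g y) = (x == y).
    move=> x y; apply/eqP/eqP => [e|->//].
    by rewrite -(Ppos gK x0 x) e (Ppos gK).
  rewrite dfS.
  set x := enum_val m.
  rewrite -(@big_enum_val_cond _ _ _ S predT (fun y => (x < y)%O) H).
  rewrite -(@big_enum_val_cond _ _ _ S predT (fun y => (y < x)%O) H).
  rewrite /H !(sum_S_ind (fun y => (y \in predT) && _)).
  apply: le_trans (Fle (pos g x) (pos_lt g x)); rewrite le_eqVlt; apply/orP; left; apply/eqP.
  rewrite /F mulr_sumr -!big_split /=; apply: eq_bigr => t _.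
  rewrite /c Hpos Hcl2.
  case: (eqVneq x (z t)) => [<-|ne] /=; first by rewrite ltxx /=; rewrite ?mulr0n ?mulr1n; ring.
  case xz: (x < z t)%O => /=.
    have -> : (z t < x)%O = false by apply/negbTE; rewrite lt_gtF.
    by rewrite /= ?mulr0n ?mulr1n; ring.
  by case: (z t < x)%O => /=; rewrite ?mulr0n ?mulr1n; ring.
Qed.

Lemma main_from_zig K (z : nat -> S) :
  @hasse_is_path disp S -> (0 < K)%N -> ~~ odd K -> Zig K z ->
  exists h : 'I_#|S| -> R, Cset (@fS disp S R) h.
Proof.
case=> p [[g pK gK] Hedge] K0 eK Z.
have Z' := Z; case: Z' => zi _ _ _ _.
have ne : pos g (z 0%N) != pos g (z 1%N).
  apply/eqP => /val_inj /(can_inj gK) /zi; lia.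
case: (ltnP (pos g (z 0%N)) (pos g (z 1%N))) => h.
  exact: (from_path pK gK Hedge K0 eK Z h).
pose p' := p \o (@rev_ord #|S|).
pose g' := (@rev_ord #|S|) \o g.
have pK' : cancel p' g' by move=> i; rewrite /p' /g' /= pK rev_ordK.
have gK' : cancel g' p' by move=> y; rewrite /p' /g' /= rev_ordK gK.
have Hedge' : forall i j : 'I_#|S|,
    hasse_edge (p' i) (p' j) = ((i.+1 == j :> nat) || (j.+1 == i :> nat)).
  move=> i j; rewrite /p' /= Hedge /=.
  have := ltn_ord i; have := ltn_ord j.
  move: (nat_of_ord i) (nat_of_ord j) => a b ha hb.
  by apply/idP/idP => /orP[] /eqP e; apply/orP; [right|left|right|left]; apply/eqP; clear -e ha hb; move: #|S| e ha hb => n e ha hb; lia.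
apply: (from_path pK' gK' Hedge' K0 eK Z).
rewrite /pos /g' /=.
have := ltn_ord (g (z 0%N)); have := ltn_ord (g (z 1%N)); move: h ne; rewrite /pos /=.
move: (nat_of_ord (g (z 0%N))) (nat_of_ord (g (z 1%N))) => a b.
clear; move: #|S| => n; lia.
Qed.

Lemma half_odd t : odd t -> t.+1./2 = (t./2).+1.
Proof. move=> o; have := odd_double_half t; have := odd_double_half t.+1; rewrite /= o /=; lia. Qed.
Lemma half_even t : ~~ odd t -> t.+1./2 = t./2.
Proof. move=> o; have := odd_double_half t; have := odd_double_half t.+1; rewrite /= (negbTE o) /=; lia. Qed.
Lemma half_inj t u : odd t = odd u -> t./2 = u./2 -> t = u.
Proof. move=> o e; have := odd_double_half t; have := odd_double_half u; rewrite o e; lia. Qed.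
Lemma half_lt_odd t k : odd t -> (t <= k.*2)%N -> (t./2 < k)%N.
Proof. move=> o h; have := odd_double_half t; rewrite o; lia. Qed.
Lemma half_lt t k : (t <= k.*2)%N -> (t./2 < k.+1)%N.
Proof. move=> h; have := odd_double_half t; lia. Qed.

Lemma zig_Wkk1 k : (0 < k)%N -> @has_Wkk1 disp S k -> exists z, Zig k.*2 z.
Proof.
move=> hk [phi [phi_inj [phi_lt [j0 jK]]]].
pose i0 : 'I_k := Ordinal hk.
pose z t := if odd t then phi (inl (insubd i0 t./2)) else phi (inr (insubd (ord0 : 'I_k.+1) t./2)).
have hl : forall m, (m < k)%N -> val (insubd i0 m) = m.
  by move=> m h; rewrite val_insubd h.
have hr : forall m, (m < k.+1)%N -> val (insubd (ord0 : 'I_k.+1) m) = m.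
  by move=> m h; rewrite val_insubd h.
exists z; split.
- move=> t u tK uK; rewrite /z.
  have := odd_double_half t; have := odd_double_half u => eu et.
  case ot: (odd t) et; case ou: (odd u) eu => eu et /phi_inj // [] /(congr1 val).
  + by rewrite hl ?hl => [e||]; try lia; apply: half_inj; rewrite ?ot ?ou.
  + by rewrite hr ?hr => [e||]; try lia; apply: half_inj; rewrite ?ot ?ou.
- move=> t tK; have := odd_double_half t => et; rewrite /z oddS.
  case ot: (odd t) et => et.
  + rewrite (half_odd ot) /= !phi_lt /= hl ?hr ?eqxx ?orbT //; lia.
  + rewrite (half_even (negbT ot)) /= !phi_lt /= hl ?hr ?eqxx ?orbT //; lia.
- move=> t tK; rewrite /z /= negbK; case: (odd t); by rewrite !phi_lt.
- rewrite /z /=; have -> : insubd (ord0 : 'I_k.+1) 0./2 = ord0 by apply/val_inj; rewrite hr.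
  exact: j0.
- rewrite /z odd_double doubleK; have -> : insubd (ord0 : 'I_k.+1) k = ord_max.
    by apply/val_inj; rewrite val_insubd ltnSn.
  exact: jK.
Qed.

Lemma zig_Wk1k k : (0 < k)%N -> @has_Wk1k disp S k -> exists z, Zig k.*2 z.
Proof.
move=> hk [phi [phi_inj [phi_lt [j0 jK]]]].
pose i0 : 'I_k := Ordinal hk.
pose z t := if odd t then phi (inr (insubd i0 t./2)) else phi (inl (insubd (ord0 : 'I_k.+1) t./2)).
have hl : forall m, (m < k)%N -> val (insubd i0 m) = m.
  by move=> m h; rewrite val_insubd h.
have hr : forall m, (m < k.+1)%N -> val (insubd (ord0 : 'I_k.+1) m) = m.
  by move=> m h; rewrite val_insubd h.
exists z; split.
- move=> t u tK uK; rewrite /z.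
  have := odd_double_half t; have := odd_double_half u => eu et.
  case ot: (odd t) et; case ou: (odd u) eu => eu et /phi_inj // [] /(congr1 val).
  + by rewrite hl ?hl => [e||]; try lia; apply: half_inj; rewrite ?ot ?ou.
  + by rewrite hr ?hr => [e||]; try lia; apply: half_inj; rewrite ?ot ?ou.
- move=> t tK; have := odd_double_half t => et; rewrite /z oddS.
  case ot: (odd t) et => et.
  + rewrite (half_odd ot) /= !phi_lt /= hl ?hr ?eqxx ?orbT //; lia.
  + rewrite (half_even (negbT ot)) /= !phi_lt /= hl ?hr ?eqxx ?orbT //; lia.
- move=> t tK; rewrite /z /= negbK; case: (odd t); by rewrite !phi_lt.
- rewrite /z /=; have -> : insubd (ord0 : 'I_k.+1) 0./2 = ord0 by apply/val_inj; rewrite hr.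
  exact: j0.
- rewrite /z odd_double doubleK; have -> : insubd (ord0 : 'I_k.+1) k = ord_max.
    by apply/val_inj; rewrite val_insubd ltnSn.
  exact: jK.
Qed.

End Main.

End EPart.
Import EPart.

Theorem lemma11 (R : realFieldType) (disp : Order.disp_t)
  (S : finPOrderType disp) (k : nat) :
  (0 < k)%N ->
  @hasse_is_path disp S ->
  (@has_Wkk1 disp S k \/ @has_Wk1k disp S k) ->
  exists h : 'I_#|S| -> R, Cset (@fS disp S R) h.
Proof.
move=> hk Hp [W|W].
- case: (zig_Wkk1 hk W) => z Z.
  apply: (main_from_zig R Hp _ _ Z); [by rewrite double_gt0 | by rewrite odd_double].
- case: (zig_Wk1k hk W) => z Z.
  apply: (main_from_zig R Hp _ _ Z); [by rewrite double_gt0 | by rewrite odd_double].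
Qed.
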